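(* Let $v\ge2$ and $M,N\in{\cal I}_v$ with $M\perp N$ with respect to the scalar product $(x,y):=\mathrm{Re}(xy^* )$. Then $$[e^M,e^N]=2\,\frac{\sin|M|}{|M|}\,\frac{\sin|N|}{|N|}\,MN .$$
   Context: ${\cal A}_v$ is the real Cayley-Dickson algebra of dimension $2^v$, $z^*$ its conjugation, $\mathrm{Re}(z)=(z+z^* )/2$, $|z|=(zz^* )^{1/2}$, ${\cal I}_v=\{z:\mathrm{Re}(z)=0\}$. For $M\in{\cal I}_v$, $e^M=\cos|M|+\frac{\sin|M|}{|M|}M$ (with $\frac{\sin|M|}{|M|}:=1$ when $M=0$). $[a,b]:=ab-ba$. *)

(* Defs.v *)
(* real Cayley-Dickson algebras A_v of dimension 2^v over R. *)
From Stdlib Require Import Reals.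
Open Scope R_scope.

Fixpoint CD (v : nat) : Type :=
  match v with 0 => R | S n => (CD n * CD n)%type end.

Fixpoint cd_const (v : nat) (r : R) : CD v :=
  match v return CD v with 0 => r | S n => (cd_const n r, cd_const n 0) end.

Definition cd_zero (v : nat) : CD v := cd_const v 0.

Fixpoint cd_add (v : nat) : CD v -> CD v -> CD v :=
  match v return CD v -> CD v -> CD v with
  | 0 => Rplus
  | S n => fun x y => (cd_add n (fst x) (fst y), cd_add n (snd x) (snd y))
  end.

Fixpoint cd_opp (v : nat) : CD v -> CD v :=
  match v return CD v -> CD v with
  | 0 => Ropp
  | S n => fun x => (cd_opp n (fst x), cd_opp n (snd x))
  end.

Definition cd_sub (v : nat) (x y : CD v) : CD v := cd_add v x (cd_opp v y).

Fixpoint cd_scal (v : nat) (r : R) : CD v -> CD v :=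
  match v return CD v -> CD v with
  | 0 => fun x => r * x
  | S n => fun x => (cd_scal n r (fst x), cd_scal n r (snd x))
  end.

Fixpoint cd_conj (v : nat) : CD v -> CD v :=
  match v return CD v -> CD v with
  | 0 => fun x => x
  | S n => fun x => (cd_conj n (fst x), cd_opp n (snd x))
  end.

(* Cayley-Dickson product: (a,b)(c,d) = (ac - d^* b, d a + b c^* ) *)
Fixpoint cd_mul (v : nat) : CD v -> CD v -> CD v :=
  match v return CD v -> CD v -> CD v with
  | 0 => Rmult
  | S n => fun x y =>
      (cd_sub n (cd_mul n (fst x) (fst y)) (cd_mul n (cd_conj n (snd y)) (snd x)),
       cd_add n (cd_mul n (snd y) (fst x)) (cd_mul n (snd x) (cd_conj n (fst y))))
  end.

(* real part: the coefficient of the unit; equals (z + z^* )/2 viewed in R *)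
Fixpoint cd_re (v : nat) : CD v -> R :=
  match v return CD v -> R with
  | 0 => fun x => x
  | S n => fun x => cd_re n (fst x)
  end.

(* |z| = (z z^* )^{1/2}  (z z^* is real) *)
Definition cd_norm (v : nat) (z : CD v) : R := sqrt (cd_re v (cd_mul v z (cd_conj v z))).

Definition cd_dot (v : nat) (x y : CD v) : R := cd_re v (cd_mul v x (cd_conj v y)).

Definition sinc (t : R) : R := if Req_EM_T t 0 then 1 else sin t / t.

Definition cd_exp (v : nat) (M : CD v) : CD v :=
  cd_add v (cd_const v (cos (cd_norm v M))) (cd_scal v (sinc (cd_norm v M)) M).

Definition cd_comm (v : nat) (a b : CD v) : CD v :=
  cd_sub v (cd_mul v a b) (cd_mul v b a).

(* Main.v *)
Require Import Defs.
From Stdlib Require Import Reals Lra Lia Arith.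
Open Scope R_scope.

Fixpoint coord (n : nat) : CD n -> nat -> R :=
  match n return CD n -> nat -> R with
  | 0 => fun x i => if Nat.eqb i 0 then x else 0
  | S m => fun x i => if Nat.even i then coord m (fst x) (Nat.div2 i)
                      else coord m (snd x) (Nat.div2 i)
  end.

Lemma ev2 i : Nat.even (2*i) = true /\ Nat.div2 (2*i) = i /\
  Nat.even (S (2*i)) = false /\ Nat.div2 (S (2*i)) = i.
Proof.
  rewrite Nat.even_even, Nat.div2_double, Nat.div2_succ_double.
  replace (S (2*i)) with (2*i+1)%nat by lia. rewrite Nat.even_odd. auto.
Qed.

Lemma cd_ext n (x y : CD n) : (forall i, coord n x i = coord n y i) -> x = y.
Proof.
  induction n as [|n IH]; intros H.
  - exact (H 0%nat).
  - destruct x as [a b], y as [c d]. f_equal; apply IH; intro i.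
    + destruct (ev2 i) as [A [B _]]. specialize (H (2*i)%nat). cbn [coord fst snd] in H.
      rewrite A, B in H. exact H.
    + destruct (ev2 i) as [_ [_ [C D]]]. specialize (H (S (2*i))%nat).
      cbn [coord fst snd] in H. rewrite C, D in H. exact H.
Qed.

Lemma coord_add n x y i : coord n (cd_add n x y) i = coord n x i + coord n y i.
Proof.
  revert i; induction n as [|n IH]; intro i; simpl.
  - destruct (Nat.eqb i 0); ring.
  - destruct (Nat.even i); apply IH.
Qed.
Lemma coord_opp n x i : coord n (cd_opp n x) i = - coord n x i.
Proof.
  revert i; induction n as [|n IH]; intro i; simpl.
  - destruct (Nat.eqb i 0); ring.
  - destruct (Nat.even i); apply IH.
Qed.
Lemma coord_scal n r x i : coord n (cd_scal n r x) i = r * coord n x i.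
Proof.
  revert i; induction n as [|n IH]; intro i; simpl.
  - destruct (Nat.eqb i 0); ring.
  - destruct (Nat.even i); apply IH.
Qed.
Lemma coord_sub n x y i : coord n (cd_sub n x y) i = coord n x i - coord n y i.
Proof. unfold cd_sub. rewrite coord_add, coord_opp. ring. Qed.
Lemma coord_const n r i : coord n (cd_const n r) i = if Nat.eqb i 0 then r else 0.
Proof.
  revert r i; induction n as [|n IH]; intros r i; [reflexivity|].
  destruct i as [|[|i]]; cbn [coord fst snd cd_const].
  - simpl. rewrite !IH. reflexivity.
  - simpl. rewrite !IH. reflexivity.
  - rewrite Nat.even_succ_succ. simpl Nat.div2.
    destruct (Nat.even i); rewrite IH; simpl; destruct (Nat.div2 i =? 0)%nat; reflexivity.
Qed.
Lemma coord_conj n x i : coord n (cd_conj n x) i =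
  if Nat.eqb i 0 then coord n x i else - coord n x i.
Proof.
  revert i; induction n as [|n IH]; intro i.
  - simpl. destruct (Nat.eqb i 0); auto. ring.
  - destruct i as [|[|i]].
    + simpl. rewrite IH. reflexivity.
    + simpl. rewrite coord_opp. reflexivity.
    + cbn [coord fst snd cd_conj]. rewrite Nat.even_succ_succ. simpl Nat.div2.
      destruct (Nat.even i); rewrite ?IH, ?coord_opp; simpl; auto.
Qed.
Lemma re_coord n x : cd_re n x = coord n x 0.
Proof. induction n as [|n IH]; simpl; auto. Qed.

Ltac lin := apply cd_ext; intro i;
  repeat first [rewrite coord_sub | rewrite coord_add | rewrite coord_opp | rewrite coord_scal
    | rewrite coord_const | rewrite coord_conj];
  repeat match goal with |- context[Nat.eqb ?j 0] => destruct (Nat.eqb j 0) end; ring.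

Lemma conj_conj n x : cd_conj n (cd_conj n x) = x.
Proof. apply cd_ext; intro i; rewrite !coord_conj; destruct (Nat.eqb i 0); ring. Qed.

Lemma mul_add_both n : (forall x y z, cd_mul n (cd_add n x y) z = cd_add n (cd_mul n x z) (cd_mul n y z))
  /\ (forall x y z, cd_mul n z (cd_add n x y) = cd_add n (cd_mul n z x) (cd_mul n z y)).
Proof.
  induction n as [|n [IH1 IH2]]; simpl; [split; intros; ring|].
  split; intros [] [] []; simpl; rewrite ?IH1, ?IH2; f_equal; try lin.
  - replace (cd_conj n (cd_add n c0 c2)) with (cd_add n (cd_conj n c0) (cd_conj n c2)) by lin.
    rewrite IH1. lin.
  - replace (cd_conj n (cd_add n c c1)) with (cd_add n (cd_conj n c) (cd_conj n c1)) by lin.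
    rewrite IH2. lin.
Qed.

Lemma mul_scal_both n r : (forall x y, cd_mul n (cd_scal n r x) y = cd_scal n r (cd_mul n x y))
  /\ (forall x y, cd_mul n x (cd_scal n r y) = cd_scal n r (cd_mul n x y)).
Proof.
  induction n as [|n [IH1 IH2]]; simpl; [split; intros; ring|].
  split; intros [] []; simpl; rewrite ?IH1, ?IH2; f_equal; try lin.
  - replace (cd_conj n (cd_scal n r c2)) with (cd_scal n r (cd_conj n c2)) by lin.
    rewrite IH1. lin.
  - replace (cd_conj n (cd_scal n r c1)) with (cd_scal n r (cd_conj n c1)) by lin.
    rewrite IH2. lin.
Qed.


Lemma mul_add_l n x y z : cd_mul n (cd_add n x y) z = cd_add n (cd_mul n x z) (cd_mul n y z).
Proof. apply mul_add_both. Qed.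
Lemma mul_add_r n x y z : cd_mul n z (cd_add n x y) = cd_add n (cd_mul n z x) (cd_mul n z y).
Proof. apply mul_add_both. Qed.
Lemma mul_scal_l n r x y : cd_mul n (cd_scal n r x) y = cd_scal n r (cd_mul n x y).
Proof. apply mul_scal_both. Qed.
Lemma mul_scal_r n r x y : cd_mul n x (cd_scal n r y) = cd_scal n r (cd_mul n x y).
Proof. apply mul_scal_both. Qed.
Lemma opp_scal n x : cd_opp n x = cd_scal n (-1) x.
Proof. lin. Qed.
Lemma mul_opp_l n x y : cd_mul n (cd_opp n x) y = cd_opp n (cd_mul n x y).
Proof. rewrite !opp_scal, mul_scal_l. reflexivity. Qed.
Lemma mul_opp_r n x y : cd_mul n x (cd_opp n y) = cd_opp n (cd_mul n x y).
Proof. rewrite !opp_scal, mul_scal_r. reflexivity. Qed.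
Lemma conj_const n r : cd_conj n (cd_const n r) = cd_const n r.
Proof. lin. Qed.

Lemma mul_const_both n : forall r, (forall y, cd_mul n (cd_const n r) y = cd_scal n r y)
  /\ (forall y, cd_mul n y (cd_const n r) = cd_scal n r y).
Proof.
  induction n as [|n IH]; simpl; [split; intros; ring|].
  intro r; split; intros []; simpl; rewrite ?conj_const;
  rewrite ?(proj1 (IH r)), ?(proj2 (IH r)), ?(proj1 (IH 0)), ?(proj2 (IH 0)); f_equal; lin.
Qed.
Lemma mul_const_l n r y : cd_mul n (cd_const n r) y = cd_scal n r y.
Proof. apply mul_const_both. Qed.
Lemma mul_const_r n r y : cd_mul n y (cd_const n r) = cd_scal n r y.
Proof. apply mul_const_both. Qed.

Lemma keyK n : forall x y, cd_add n (cd_mul n x (cd_conj n y)) (cd_mul n y (cd_conj n x))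
   = cd_const n (2 * cd_re n (cd_mul n x (cd_conj n y))).
Proof.
  induction n as [|n IH]; simpl; [intros; ring|].
  intros [a b] [c d]; simpl.
  rewrite !re_coord, !coord_sub.
  rewrite <- !re_coord.
  replace (cd_conj n (cd_opp n d)) with (cd_opp n (cd_conj n d)) by lin.
  replace (cd_conj n (cd_opp n b)) with (cd_opp n (cd_conj n b)) by lin.
  rewrite !mul_opp_l, !conj_conj.
  pose proof (IH a c) as H1. pose proof (IH (cd_conj n d) (cd_conj n b)) as H2.
  rewrite !conj_conj in H2.
  f_equal.
  - apply cd_ext; intro i. apply (f_equal (fun z => coord n z i)) in H1.
    apply (f_equal (fun z => coord n z i)) in H2.
    rewrite !re_coord.
    repeat first [rewrite coord_sub in * | rewrite coord_add in * | rewrite coord_opp in *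
      | rewrite coord_const in *].
    destruct (Nat.eqb i 0) eqn:E.
    + apply Nat.eqb_eq in E; subst i. rewrite !re_coord in *. lra.
    + lra.
  - lin.
Qed.

Lemma pure_conj n M : cd_re n M = 0 -> cd_conj n M = cd_opp n M.
Proof.
  intro H. rewrite re_coord in H. apply cd_ext; intro i.
  rewrite coord_conj, coord_opp. destruct i; simpl; [lra|ring].
Qed.

Theorem lemma11 (v : nat) (Hv : (2 <= v)%nat) (M N : CD v)
  (HM : cd_re v M = 0) (HN : cd_re v N = 0) (HMN : cd_dot v M N = 0) :
  cd_comm v (cd_exp v M) (cd_exp v N) =
  cd_scal v (2 * sinc (cd_norm v M) * sinc (cd_norm v N)) (cd_mul v M N).
Proof.
  assert (HA : cd_mul v N M = cd_opp v (cd_mul v M N)).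
  { pose proof (keyK v M N) as K. unfold cd_dot in HMN. rewrite HMN in K.
    rewrite (pure_conj v M HM), (pure_conj v N HN), !mul_opp_r in K.
    apply cd_ext; intro i. apply (f_equal (fun z => coord v z i)) in K.
    rewrite coord_add, !coord_opp, coord_const in K. rewrite coord_opp.
    destruct (Nat.eqb i 0); lra. }
  unfold cd_comm, cd_exp.
  set (a := cos (cd_norm v M)). set (b := cos (cd_norm v N)).
  set (al := sinc (cd_norm v M)). set (be := sinc (cd_norm v N)).
  rewrite !mul_add_l, !mul_add_r, ?mul_const_l, ?mul_const_r, ?mul_scal_l, ?mul_scal_r,
    ?mul_const_l, ?mul_const_r, HA.
  lin.
Qed.
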